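(* Let $k\ge 1$, $0\le r<k$ and $n\ge 1$ be integers, and let $$C_n(k,r,x)=\left(\binom{ki+r}{i-j}x^k+\binom{k(i+1)+r}{i-j+1}\right)_{i,j=0}^{n-1}.$$ Then $x^r\det C_n(k,r,x)=L^{(k)}_{kn+r}(x)$.
   Context: Binomial coefficients: for integers $m\ge 0$ and $j$, $\binom{m}{j}$ is the usual binomial coefficient, with $\binom{m}{j}=0$ if $j<0$ or $j>m$. For an integer $k\ge1$, the generalized Lucas polynomials $L^{(k)}_n(x)\in\mathbb{Z}[x]$ ($n\ge0$) are defined by $L^{(k)}_0(x)=k$, $L^{(k)}_n(x)=x^n$ for $0<n<k$, and $L^{(k)}_n(x)=xL^{(k)}_{n-1}(x)+L^{(k)}_{n-k}(x)$ for $n\ge k$; equivalently, for $n\ge1$, $L^{(k)}_n(x)=\sum_{j=0}^{\lfloor n/k\rfloor}\frac{n}{n-(k-1)j}\binom{n-(k-1)j}{j}x^{n-kj}$. *)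

(* Defs.v *)
From HB Require Import structures.
From mathcomp Require Import all_boot all_order all_algebra.
Set Implicit Arguments. Unset Strict Implicit. Unset Printing Implicit Defensive.
Import Order.TTheory GRing.Theory Num.Theory.
Local Open Scope ring_scope.

Definition binz (m : nat) (j : int) : int :=
  match j with
  | Posz t => ('C(m, t))%:Z
  | Negz _ => 0
  end.

(* lucas_aux k n = [:: L_n; L_(n-1); ...; L_0] for the generalized Lucas
   polynomials L^(k) defined by L_0 = k, L_n = x^n (0<n<k),
   L_n = x L_(n-1) + L_(n-k) (n >= k). *)
Fixpoint lucas_aux (k n : nat) : seq {poly int} :=
  match n with
  | 0 => [:: (k%:Z)%:P]
  | n'.+1 =>
      let s := lucas_aux k n' in
      (if (n'.+1 < k)%N then 'X^(n'.+1) else 'X * head 0 s + nth 0 s k.-1) :: s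
  end.

Definition lucasL (k n : nat) : {poly int} := head 0 (lucas_aux k n).

Definition Cmat (k r n : nat) : 'M[{poly int}]_n :=
  \matrix_(i < n, j < n)
    ((binz (k * i + r) (i%:Z - j%:Z))%:P * 'X^k
     + (binz (k * i.+1 + r) (i%:Z - j%:Z + 1))%:P).

(* Main.v *)
Require Import Defs.
From HB Require Import structures.
From mathcomp Require Import all_boot all_order all_algebra.
From mathcomp Require Import ring zify.
Import GRing.Theory.
Local Open Scope ring_scope.

Section L.
Variable k : nat.
Hypothesis hk : (1 <= k)%N.

Lemma nth_lucas_aux n i : (i <= n)%N -> nth 0 (lucas_aux k n) i = lucasL k (n - i).
Proof.
elim: n i => [|n IH] [|i] Hi //=.
by rewrite IH.
Qed.

Lemma lucasL_small n : (0 < n < k)%N -> lucasL k n = 'X^n.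
Proof. case: n => [|n] //= H; by rewrite /lucasL /= H. Qed.

Lemma lucasL_rec n : (k <= n.+1)%N -> lucasL k n.+1 = 'X * lucasL k n + lucasL k (n.+1 - k).
Proof.
move=> H; rewrite /lucasL /=; rewrite ltnNge H /=.
rewrite nth_lucas_aux; last by lia.
by congr (_ + _); congr lucasL; lia.
Qed.

Definition Lp n : {poly int} := if n is 0 then 1 else lucasL k n.

Lemma Lp_small n : (n < k)%N -> Lp n = 'X^n.
Proof. by case: n => [|n] H; rewrite /Lp ?expr0 // lucasL_small. Qed.

Lemma lucasL0 : lucasL k 0 = (k%:Z)%:P.
Proof. by []. Qed.

Lemma Lp_k : Lp k = 'X^k + (k%:Z)%:P.
Proof.
have E: k = k.-1.+1 by lia.
rewrite /Lp {1}E {2}E (lucasL_rec k.-1) -E ?subnn // lucasL0.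
case: (posnP k.-1) => H0.
  have E1 : k = 1%N by lia.
  by rewrite H0 lucasL0 E1 mulr1 expr1.
by rewrite lucasL_small ?(prednK hk) ?H0 ?leqnn -?exprS -?E //; lia.
Qed.

Lemma Lp_rec n : (k < n)%N -> Lp n = 'X * Lp n.-1 + Lp (n - k).
Proof.
case: n => [|n] //= H; rewrite /Lp lucasL_rec; last by lia.
case: n H => [|n] H; first by lia.
by case E: (n.+2 - k)%N => [|m]; [lia|].
Qed.

Definition f N i : {poly int} :=
  if (k * i <= N)%N then (-1) ^+ i * ('C(N, i))%:R * Lp (N - k * i) else 0.
Definition d N i : {poly int} :=
  if (k * i == N.+1)%N then (-1) ^+ i * ('C(N, i))%:R else 0.
Definition cp N i : {poly int} := if (0 < i)%N then ('C(N, i.-1))%:R else 0.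
Definition v N i : {poly int} :=
  if (k * i <= N.+1)%N then (-1) ^+ i * cp N i * Lp (N.+1 - k * i) else 0.
Definition w N i := d N i + v N i.

Lemma pascal N i : ('C(N.+1, i))%:R = ('C(N, i))%:R + cp N i :> {poly int}.
Proof. rewrite /cp; case: i => [|i] /=; first by rewrite !bin0 addr0. by rewrite binS natrD. Qed.
Lemma binfact N i : (k * i.+1 = N.+1)%N -> ('C(N, i))%:R * (k%:Z)%:P = ('C(N, i.+1))%:R + ('C(N, i))%:R :> {poly int}.
Proof.
move=> H.
have E : ('C(N, i) * k = 'C(N, i.+1) + 'C(N, i))%N.
  have H2 := mul_bin_left N i.
  have E2 : (N - i = (k - 1) * i.+1)%N by rewrite mulnBl mul1n H; lia.
  rewrite E2 in H2.
  apply/eqP; rewrite -(eqn_pmul2l (ltn0Sn i)); apply/eqP.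
  move: H2; set C0 := 'C(N, i); set C1 := 'C(N, i.+1) => H2.
  rewrite mulnDr H2; nia.
by rewrite -natz polyC_natr -natrM E natrD.
Qed.

Ltac bsimp := repeat match goal with |- context [if ?b then _ else _] =>
  (have -> : b = true by lia) || (have -> : b = false by (apply/negbTE; lia)) end.

Lemma step N i : f N.+1 i = 'X * f N i + w N i - w N i.+1.
Proof.
rewrite /f /w /d /v mulnS /=.
set m := (k * i)%N.
rewrite pascal !exprS.
have [Ha|Hb] := ltnP N.+1 m.
  bsimp. by rewrite !(mulr0, addr0, subr0).
have [Hc|Hd] := eqVneq m N.+1.
  bsimp.
  rewrite Hc subnn /Lp. ring.
have [He|Hf] := ltnP N.+1 (k + m).
  bsimp.
  rewrite !Lp_small; try lia.
  have -> : (N.+1 - m = (N - m).+1)%N by lia.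
  rewrite exprS; ring.
have [Hg|Hh] := eqVneq (k + m) N.+1.
  bsimp.
  have -> : (N.+1 - m = k)%N by lia.
  have -> : (N.+1 - (k + m) = 0)%N by lia.
  rewrite Lp_k Lp_small; last by lia.
  have Hki : (k * i.+1 = N.+1)%N by rewrite mulnS; lia.
  have B := @binfact N i Hki.
  have -> : ('C(N, i.+1))%:R = ('C(N, i))%:R * (k%:Z)%:P - ('C(N, i))%:R :> {poly int}
    by rewrite B addrK.
  have -> : 'X^k = 'X * 'X^(N - m) :> {poly int} by rewrite -exprS; congr (_ ^+ _); lia.
  rewrite /Lp; ring.
bsimp.
rewrite (@Lp_rec (N.+1 - m)%N); last by lia.
have -> : ((N.+1 - m).-1 = N - m)%N by lia.
have -> : ((N.+1 - m) - k = N.+1 - (k + m))%N by lia.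
ring.
Qed.

Lemma w0 N : w N 0 = 0.
Proof. by rewrite /w /d /v /cp muln0 /= mulr0 mul0r add0r. Qed.

Lemma wN N : w N N.+2 = 0.
Proof.
rewrite /w /d /v.
have -> : (k * N.+2 == N.+1)%N = false by apply/negbTE; nia.
have -> : (k * N.+2 <= N.+1)%N = false by apply/negbTE; nia.
by rewrite addr0.
Qed.

Lemma Psum N : \sum_(0 <= i < N.+1) f N i = 'X^N.
Proof.
elim: N => [|N IH].
  by rewrite big_nat1 /f muln0 /= expr0 mul1r mulr1 bin0.
have T : \sum_(0 <= i < N.+2) (w N i - w N i.+1) = 0.
  have := telescope_sumr (w N) (leq0n N.+2).
  rewrite wN w0 subrr => H.
  by rewrite -[LHS]opprK -sumrN; under eq_bigr do rewrite opprB; rewrite H oppr0.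
have F : \sum_(0 <= i < N.+2) f N i = 'X^N.
  rewrite big_nat_recr //= IH /f.
  have -> : (k * N.+1 <= N)%N = false by apply/negbTE; nia.
  by rewrite addr0.
under eq_bigr do rewrite step -addrA.
by rewrite big_split /= -mulr_sumr F T addr0 exprS.
Qed.

Lemma sgn_sub i j : (j <= i)%N -> (-1) ^+ j = (-1) ^+ i * (-1) ^+ (i - j) :> {poly int}.
Proof.
move=> H; rewrite -{1}(subnK H) exprD.
by rewrite mulrC mulrA -expr2 sqrr_sign mul1r.
Qed.

Variable r : nat.
Hypothesis hr : (r < k)%N.

Definition E j := Lp (k * j + r).

Lemma Tm m : \sum_(0 <= j < m.+1) (-1) ^+ (m - j) * ('C(k * m + r, m - j))%:R * E j
  = 'X^(k * m + r).
Proof.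
have P := Psum (k * m + r).
rewrite (@big_cat_nat _ _ _ m.+1) /= in P; [|done|nia].
have Z : \sum_(m.+1 <= i < (k * m + r).+1) f (k * m + r) i = 0.
  rewrite big_nat_cond big1 // => i /andP[/andP[Hi1 Hi2] _].
  rewrite /f ifF //; apply/negbTE; nia.
rewrite Z addr0 in P.
rewrite big_nat_rev /= in P.
rewrite -P; apply: eq_big_nat => j /andP[_ Hj].
rewrite add0n subSS /f ifT; last by nia.
rewrite /E; congr (_ * Lp _).
rewrite mulnBr; have : (k * j <= k * m)%N by apply: leq_mul.
lia.
Qed.

Lemma binz_pos a i j : (j <= i)%N -> binz a (i%:Z - j%:Z) = ('C(a, i - j))%:Z.
Proof. by move=> H; rewrite subzn. Qed.

Lemma binz_neg a i : binz a (i%:Z - (i.+1)%:Z) = 0.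
Proof. have -> : i%:Z - (i.+1)%:Z = -1 by lia. by []. Qed.

Lemma binz_pos1 a i j : (j <= i.+1)%N -> binz a (i%:Z - j%:Z + 1) = ('C(a, i.+1 - j))%:Z.
Proof. move=> H; have -> : i%:Z - j%:Z + 1 = (i.+1)%:Z - j%:Z by lia. by rewrite subzn. Qed.

Lemma CPz a b : (('C(a, b))%:Z)%:P = ('C(a, b))%:R :> {poly int}.
Proof. by rewrite -natz polyC_natr. Qed.

Definition Hf (i j : nat) : {poly int} :=
  (binz (k * i + r) (i%:Z - j%:Z))%:P * 'X^k + (binz (k * i.+1 + r) (i%:Z - j%:Z + 1))%:P.

Lemma rowrel i : \sum_(0 <= j < i.+2) Hf i j * ((-1) ^+ j * E j) = 0.
Proof.
rewrite /Hf; under eq_bigr do rewrite mulrDl; rewrite big_split /=.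
rewrite big_nat_recr //= binz_neg polyC0 !mul0r addr0.
have A : \sum_(0 <= j < i.+1) (binz (k * i + r) (i%:Z - j%:Z))%:P * 'X^k * ((-1) ^+ j * E j)
   = (-1) ^+ i * 'X^k * 'X^(k * i + r).
  rewrite -Tm mulr_sumr; apply: eq_big_nat => j /andP[_ Hj].
  rewrite binz_pos // CPz (@sgn_sub i j Hj); ring.
have B : \sum_(0 <= j < i.+2) (binz (k * i.+1 + r) (i%:Z - j%:Z + 1))%:P * ((-1) ^+ j * E j)
   = (-1) ^+ i.+1 * 'X^(k * i.+1 + r).
  rewrite -Tm mulr_sumr; apply: eq_big_nat => j /andP[_ Hj].
  rewrite binz_pos1 // CPz (@sgn_sub i.+1 j Hj); ring.
rewrite A B exprS -mulrA -exprD.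
have -> : (k + (k * i + r) = k * i.+1 + r)%N by rewrite mulnS; lia.
ring.
Qed.

Lemma binz_lt0 a z : z < 0 -> binz a z = 0.
Proof. by case: z. Qed.

Lemma Hf0 i j : (i.+1 < j)%N -> Hf i j = 0.
Proof.
move=> H; rewrite /Hf !binz_lt0; try lia.
by rewrite polyC0 mul0r addr0.
Qed.

Lemma Hf1 i : Hf i i.+1 = 1.
Proof.
rewrite /Hf binz_neg polyC0 mul0r add0r.
have -> : i%:Z - (i.+1)%:Z + 1 = 0 by lia.
by rewrite /= bin0.
Qed.

Lemma colsum n' (i : nat) : (i <= n')%N ->
  \sum_(0 <= l < n'.+1) Hf i l * ((-1) ^+ l * E l) = - (Hf i n'.+1 * ((-1) ^+ n'.+1 * E n'.+1)).
Proof.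
move=> Hi; apply/eqP; rewrite -subr_eq0 opprK -big_nat_recr //=; apply/eqP.
rewrite (@big_cat_nat _ _ _ i.+2) //=.
rewrite rowrel add0r big_nat_cond big1 // => l /andP[/andP[H1 H2] _].
by rewrite Hf0 ?mul0r.
Qed.
End L.

Theorem theorem3 (k r n : nat) (hk : (1 <= k)%N) (hr : (r < k)%N) (hn : (1 <= n)%N) :
  'X^r * \det (Cmat k r n) = lucasL k (k * n + r).
Proof.
case: n hn => [|n'] // _.
set A := Cmat k r n'.+1.
have AE : forall i j : 'I_n'.+1, A i j = Hf k r i j by move=> i j; rewrite mxE.
pose wv (j : nat) := (-1) ^+ j * E k r j.
pose W : 'M[{poly int}]_n'.+1 := \matrix_(i, j) (if j == ord0 then wv i else (i == j)%:R).
have detW : \det W = 'X^r.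
  rewrite det_trig; last first.
    apply/is_trig_mxP => i j Hij; rewrite mxE.
    have /negbTE -> : j != ord0 by apply/eqP=> E0; rewrite E0 in Hij.
    have /negbTE -> : i != j by apply/eqP => E0; rewrite E0 ltnn in Hij.
    by [].
  rewrite big_ord_recl big1 ?mulr1; last by move=> i _; rewrite mxE /= eqxx.
  by rewrite mxE eqxx /wv /E expr0 mul1r muln0 add0n Lp_small.
have AWc0 : forall i : 'I_n'.+1, (A *m W) i ord0 = if i == ord_max then - wv n'.+1 else 0.
  move=> i; rewrite [LHS]mxE.
  under eq_bigr do rewrite AE mxE eqxx.
  rewrite -(big_mkord xpredT (fun l => Hf k r i l * wv l)) /wv (@colsum k hk r hr); last by rewrite -ltnS.
  case: eqP => [->|Hne] /=; first by rewrite (_ : Hf k r _ _ = 1) ?mul1r // (@Hf1 k hk r hr n').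
  rewrite (@Hf0 k hk r hr) ?mul0r ?oppr0 //.
  have : (i < n'.+1)%N by [].
  have : (nat_of_ord i != n') by apply/eqP => Hin; apply: Hne; apply: val_inj.
  lia.
have AWc : forall i j : 'I_n'.+1, j != ord0 -> (A *m W) i j = A i j.
  move=> i j Hj; rewrite mxE (bigD1 j) //= big1 ?addr0.
    by rewrite [W _ _]mxE (negbTE Hj) eqxx mulr1.
  move=> l Hl; rewrite [W _ _]mxE (negbTE Hj).
  by rewrite (negbTE Hl) mulr0.
have detM : \det (row' ord_max (col' ord0 (A *m W))) = 1.
  rewrite det_trig; last first.
    apply/is_trig_mxP => i j Hij; rewrite 2!mxE AWc; last by rewrite eq_sym neq_lift.
    by rewrite AE lift_max lift0 (@Hf0 k hk r hr).
  rewrite big1 // => i _; rewrite 2!mxE AWc; last by rewrite eq_sym neq_lift.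
  by rewrite AE lift_max lift0 (@Hf1 k hk r hr).
have LP : forall m, (0 < m)%N -> lucasL k m = Lp k m by case.
rewrite -detW mulrC -det_mulmx (expand_det_col _ ord0) (bigD1 ord_max) //= big1 ?addr0; last first.
  by move=> i Hi; rewrite AWc0 (negbTE Hi) mul0r.
rewrite AWc0 eqxx /cofactor detM LP; last by nia.
have S : (-1) ^+ n' * (-1) ^+ n' = 1 :> {poly int} by rewrite -expr2 sqrr_sign.
have -> : ((ord_max : 'I_n'.+1) + (ord0 : 'I_n'.+1))%N = n' by rewrite /= addn0.
rewrite /wv /E exprS.
transitivity ((-1) ^+ n' * (-1) ^+ n' * Lp k (k * n'.+1 + r)); first ring.
by rewrite S mul1r.
Qed.
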